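(* Let $\varphi\colon E\to E$ be the homomorphism with $\varphi(e_1)=-e_1$ and $\varphi(e_n)=-e_n+2e_1e_n$ for $n>1$. Then $\varphi$ is an automorphism of order 2, and $E_\varphi$ is $\mathbb{Z}_2$-isomorphic to $E_{can}$.
   Context: $F$ is a field of characteristic zero, $L$ an infinite-dimensional $F$-vector space with basis $e_1,e_2,\ldots$, $E$ its Grassmann algebra. $E_\varphi$ is the $\mathbb{Z}_2$-grading on $E$ by eigenspaces of $\varphi$ for $1$ (degree 0) and $-1$ (degree 1). $E_{can}=E_{(0)}\oplus E_{(1)}$ is the natural grading: $E_{(0)}$ spanned by $1$ and monomials of even length, $E_{(1)}$ by monomials of odd length. $\mathbb{Z}_2$-isomorphic means isomorphic via an algebra isomorphism preserving degree components. *)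

(* Defs.v *)
From HB Require Import structures.
From mathcomp Require Import all_boot all_order all_algebra.
Set Implicit Arguments. Unset Strict Implicit. Unset Printing Implicit Defensive.
Import Order.TTheory GRing.Theory Num.Theory.
Local Open Scope ring_scope.

Definition grass_mono (F : fieldType) (A : algType F) (e : nat -> A)
  (s : seq nat) : A := \prod_(i <- s) e i.

Definition incr_seq (s : seq nat) : bool := sorted ltn s.

Definition in_mono_span (F : fieldType) (A : algType F) (e : nat -> A)
  (P : seq nat -> bool) (x : A) : Prop :=
  exists (ss : seq (seq nat)) (c : seq nat -> F),
    all incr_seq ss /\ all P ss /\ x = \sum_(s <- ss) c s *: grass_mono e s.

(* (A, e) is the Grassmann algebra of the vector space with basis
   e_0, e_1, e_2, ...: the generators anticommute, square to zero, and the
   standard monomials (incl. the empty one, = 1) form an F-basis of A. *)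
Definition is_grassmann (F : fieldType) (A : algType F) (e : nat -> A) : Prop :=
  [/\ (forall i j, e i * e j = - (e j * e i)),
      (forall i, e i * e i = 0),
      (forall x : A, in_mono_span e predT x) &
      (forall (ss : seq (seq nat)) (c : seq nat -> F),
          uniq ss -> all incr_seq ss ->
          \sum_(s <- ss) c s *: grass_mono e s = 0 ->
          forall s, s \in ss -> c s = 0)].

Definition is_alg_hom (F : fieldType) (A : algType F) (f : A -> A) : Prop :=
  [/\ (forall (a : F) (x y : A), f (a *: x + y) = a *: f x + f y),
      (forall x y : A, f (x * y) = f x * f y) &
      f 1 = 1].

(* Natural grading E_can = E_(0) (+) E_(1). *)
Definition grass_even (F : fieldType) (A : algType F) (e : nat -> A) (x : A) : Prop :=
  in_mono_span e (fun s => ~~ odd (size s)) x.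
Definition grass_odd (F : fieldType) (A : algType F) (e : nat -> A) (x : A) : Prop :=
  in_mono_span e (fun s => odd (size s)) x.

(* Main.v *)
Require Import Defs.
From HB Require Import structures.
From mathcomp Require Import all_boot all_order all_algebra.
Import Order.TTheory GRing.Theory Num.Theory.
Local Open Scope ring_scope.
Set Implicit Arguments. Unset Strict Implicit.

Section AlgHom.
Variables (F : fieldType) (A : algType F) (f : A -> A).
Hypothesis hf : is_alg_hom f.

Lemma ah0 : f 0 = 0.
Proof.
case: hf => fL _ _; have := fL 1 0 0; rewrite !scale1r addr0 => H.
have := congr1 (fun z => z - f 0) H; rewrite /= addrK subrr => H2.
by rewrite {2}H2.
Qed.
Lemma ahD x y : f (x + y) = f x + f y.
Proof. by case: hf => fL _ _; have := fL 1 x y; rewrite !scale1r. Qed.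
Lemma ahZ a x : f (a *: x) = a *: f x.
Proof. by case: hf => fL _ _; have := fL a x 0; rewrite !addr0 ah0 addr0. Qed.
Lemma ahN x : f (- x) = - f x.
Proof. by rewrite -scaleN1r ahZ scaleN1r. Qed.
Lemma ahB x y : f (x - y) = f x - f y.
Proof. by rewrite ahD ahN. Qed.
Lemma ahM x y : f (x * y) = f x * f y.
Proof. by case: hf. Qed.
Lemma ah1 : f 1 = 1.
Proof. by case: hf. Qed.
Lemma ahMn x n : f (x *+ n) = f x *+ n.
Proof. by elim: n => [|n IH]; rewrite ?mulr0n ?ah0 // !mulrS ahD IH. Qed.
Lemma ah_sum (I : Type) (r : seq I) (G : I -> A) :
  f (\sum_(i <- r) G i) = \sum_(i <- r) f (G i).
Proof. by elim: r => [|i r IH]; rewrite ?big_nil ?ah0 // !big_cons ahD IH. Qed.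
Lemma ah_prod (I : Type) (r : seq I) (G : I -> A) :
  f (\prod_(i <- r) G i) = \prod_(i <- r) f (G i).
Proof. by elim: r => [|i r IH]; rewrite ?big_nil ?ah1 // !big_cons ahM IH. Qed.
End AlgHom.

Lemma ah_comp (F : fieldType) (A : algType F) (f g : A -> A) :
  is_alg_hom f -> is_alg_hom g -> is_alg_hom (fun x => f (g x)).
Proof.
move=> hf hg; split.
- by move=> a x y; rewrite (ahD hg) (ahZ hg) (ahD hf) (ahZ hf).
- by move=> x y; rewrite (ahM hg) (ahM hf).
- by rewrite (ah1 hg) (ah1 hf).
Qed.

Section Conj.
Variables (F : fieldType) (A : algType F) (h hi : A).
Hypotheses (hhi : h * hi = 1) (hih : hi * h = 1).
Lemma conj_hom : is_alg_hom (fun x => h * x * hi).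
Proof.
split.
- by move=> a x y; rewrite mulrDr mulrDl -scalerAr -scalerAl.
- by move=> x y; rewrite -!mulrA (mulrA hi) hih mul1r.
- by rewrite mulr1.
Qed.
End Conj.

Section Nil.
Variables (F : fieldType) (A : algType F) (a : A).
Hypothesis aa : a * a = 0.
Lemma unit_nil k : (1 + k *: a) * (1 - k *: a) = 1.
Proof.
rewrite mulrDl mul1r mulrBr mulr1 -scalerAl -scalerAr aa !scaler0 subr0.
by rewrite subrK.
Qed.
Lemma conj_nil k x : x * a = - (a * x) ->
  (1 + k *: a) * x * (1 - k *: a) = x + (k + k) *: (a * x).
Proof.
move=> xa.
rewrite mulrDl mul1r mulrBr mulr1 mulrDl -!scalerAl -!scalerAr.
have -> : a * x * a = 0 by rewrite -mulrA xa mulrN mulrA aa mul0r oppr0.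
rewrite !scaler0 addr0 xa scalerN opprK scalerDl; by rewrite addrA.
Qed.
End Nil.

Section Grass.
Variables (F : fieldType) (A : algType F) (e : nat -> A).

Lemma sign_mono (g : A -> A) : is_alg_hom g -> (forall i, g (e i) = - e i) ->
  forall s, g (grass_mono e s) = (-1) ^+ size s *: grass_mono e s.
Proof.
move=> hg ge s; rewrite /grass_mono (ah_prod hg).
elim: s => [|i s IH]; first by rewrite !big_nil expr0 scale1r.
by rewrite !big_cons ge IH mulNr -scalerAr /= exprS mulN1r scaleNr.
Qed.

Lemma even_fix (g : A -> A) : is_alg_hom g -> (forall i, g (e i) = - e i) ->
  forall y, grass_even e y -> g y = y.
Proof.
move=> hg ge y [ss [c [_ [hP ->]]]]; rewrite (ah_sum hg); apply: eq_big_seq => s hs.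
rewrite (ahZ hg) (sign_mono hg ge) -signr_odd.
by move: (allP hP s hs) => /negbTE ->; rewrite expr0 scale1r.
Qed.

Lemma odd_fix (g : A -> A) : is_alg_hom g -> (forall i, g (e i) = - e i) ->
  forall y, grass_odd e y -> g y = - y.
Proof.
move=> hg ge y [ss [c [_ [hP ->]]]]; rewrite (ah_sum hg) -sumrN; apply: eq_big_seq => s hs.
rewrite (ahZ hg) (sign_mono hg ge) -signr_odd.
by move: (allP hP s hs) => ->; rewrite expr1 scaleN1r scalerN.
Qed.

Lemma decomp : is_grassmann e -> forall y, exists ye yo,
  [/\ y = ye + yo, grass_even e ye & grass_odd e yo].
Proof.
case=> _ _ hsp _ y; case: (hsp y) => ss [c [hI [_ ->]]].
exists (\sum_(s <- ss | ~~ odd (size s)) c s *: grass_mono e s).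
exists (\sum_(s <- ss | odd (size s)) c s *: grass_mono e s).
split.
- by rewrite (bigID (fun s => odd (size s))) /= addrC.
- exists [seq s <- ss | ~~ odd (size s)], c; split; last split.
  + by apply/allP => s; rewrite mem_filter => /andP[_ /(allP hI)].
  + exact: filter_all.
  + by rewrite big_filter.
- exists [seq s <- ss | odd (size s)], c; split; last split.
  + by apply/allP => s; rewrite mem_filter => /andP[_ /(allP hI)].
  + exact: filter_all.
  + by rewrite big_filter.
Qed.
End Grass.

Theorem mainTheorem10 (F : fieldType) (A : algType F) (e : nat -> A)
  (phi : A -> A) :
  [pchar F] =i pred0 ->
  is_grassmann e ->
  is_alg_hom phi ->
  phi (e 0%N) = - e 0%N ->
  (forall n : nat, phi (e n.+1) = - e n.+1 + 2%:R * (e 0%N * e n.+1)) ->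
  [/\ bijective phi,
      (forall x, phi (phi x) = x),
      (exists x, phi x <> x) &
      exists psi : A -> A,
        [/\ is_alg_hom psi, bijective psi,
            (forall x, phi x = x <-> grass_even e (psi x)) &
            (forall x, phi x = - x <-> grass_odd e (psi x))]].
Proof.
move=> hchar hG hphi phi0 phiS.
have two : (2%:R : F) != 0 by have := hchar 2%N; rewrite !inE /= => ->.
set c : F := (2%:R)^-1.
have cc : c + c = 1 by rewrite -mulr2n -mulr_natr mulVf.
have half : forall y : A, y + y = 0 -> y = 0.
  by move=> y hy; rewrite -[y]scale1r -cc scalerDl -scalerDr hy scaler0.
have anti := hG.
case: anti => anti sq _ indep.
set a := e 0%N.
have aa : a * a = 0 by exact: sq.
set h := 1 + c *: a.
set hi := 1 - c *: a.
have hhi : h * hi = 1 by exact: unit_nil.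
have hih : hi * h = 1.
  by have := unit_nil aa (- c); rewrite !scaleNr opprK.
have hiE : hi = 1 + (- c) *: a by rewrite scaleNr.
have hE : h = 1 - (- c) *: a by rewrite scaleNr opprK.
set psi := fun x => h * x * hi.
set psii := fun y => hi * y * h.
have hpsi : is_alg_hom psi by exact: conj_hom.
have hpsii : is_alg_hom psii by exact: conj_hom.
have psiK : forall y, psi (psii y) = y.
  by move=> y; rewrite /psi /psii !mulrA hhi mul1r -mulrA hhi mulr1.
have psiiK : forall y, psii (psi y) = y.
  by move=> y; rewrite /psi /psii !mulrA hih mul1r -mulrA hih mulr1.
set tau := fun y => psi (phi (psii y)).
have htau : is_alg_hom tau by apply: ah_comp => //; apply: ah_comp.
have tauE : forall i, tau (e i) = - e i.
  case=> [|n].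
  - rewrite /tau /psii hiE hE (conj_nil aa); last by rewrite aa oppr0.
    rewrite aa scaler0 addr0 phi0 /psi /h /hi (conj_nil aa); last first.
      by rewrite mulrN mulNr aa !oppr0.
    by rewrite mulrN aa oppr0 scaler0 addr0.
  - set b := e n.+1.
    have ba : b * a = - (a * b) by exact: anti.
    rewrite /tau /psii hiE hE (conj_nil aa) // -opprD cc scaleN1r.
    have -> : phi (b - a * b) = - b + a * b.
      rewrite (ahB hphi) (ahM hphi) phi0 phiS -/a -/b.
      rewrite mulNr opprK mulrDr mulrN !mulr_natl mulrnAr mulrA aa mul0r mul0rn addr0.
      by rewrite mulr2n addrA addrK.
    rewrite /psi /h /hi (conj_nil aa); last first.
      rewrite mulrDl mulNr ba opprK -mulrA ba mulrN mulrA aa mul0r oppr0 addr0.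
      by rewrite mulrDr mulrN mulrA aa mul0r addr0 opprK.
    rewrite cc scale1r mulrDr mulrN mulrA aa mul0r addr0.
    by rewrite addrK.
have tau_ev := even_fix htau tauE.
have tau_od := odd_fix htau tauE.
have tauinv : forall y, tau (tau y) = y.
  move=> y; case: (decomp hG y) => ye [yo [-> hye hyo]].
  rewrite (ahD htau) (tau_ev ye) // (tau_od yo) // (ahB htau) (tau_ev ye) // (tau_od yo) //.
  by rewrite opprK.
have tau_psi : forall x, tau (psi x) = psi (phi x).
  by move=> x; rewrite /tau psiiK.
have phiE : forall x, phi x = psii (tau (psi x)).
  by move=> x; rewrite tau_psi psiiK.
have phiphi : forall x, phi (phi x) = x.
  by move=> x; rewrite !phiE psiK tauinv psiiK.
have psi_inj : forall x y, psi x = psi y -> x = y.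
  by move=> x y hxy; rewrite -(psiiK x) hxy psiiK.
split.
- by exists phi.
- exact: phiphi.
- exists a; rewrite phi0 => H.
  have a0 : a = 0 by apply: half; rewrite -{1}H addNr.
  have := indep [:: [:: 0%N]] (fun _ => 1) erefl erefl.
  rewrite big_seq1 /grass_mono big_seq1 -/a a0 scaler0 => /(_ erefl [:: 0%N]).
  by rewrite mem_seq1 eqxx => /(_ erefl) /eqP; rewrite oner_eq0.
- exists psi; split => //.
  + by exists psii.
  + move=> x; split.
    * move=> hx; case: (decomp hG (psi x)) => ye [yo [hy hye hyo]].
      have := tau_psi x; rewrite hx hy (ahD htau) (tau_ev ye) // (tau_od yo) // => /addrI H.
      have yo0 : yo = 0 by apply: half; rewrite -{2}H subrr.
      by rewrite yo0 addr0.
    * by move=> hev; apply: psi_inj; rewrite -tau_psi tau_ev.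
  + move=> x; split.
    * move=> hx; case: (decomp hG (psi x)) => ye [yo [hy hye hyo]].
      have := tau_psi x; rewrite hx (ahN hpsi) hy (ahD htau) (tau_ev ye) // (tau_od yo) //.
      rewrite opprD => /addIr H.
      have ye0 : ye = 0 by apply: half; rewrite {2}H subrr.
      by rewrite ye0 add0r.
    * by move=> hod; apply: psi_inj; rewrite -tau_psi tau_od // (ahN hpsi).
Qed.
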